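(* Let $p'$ be a joint distribution of two binary random variables $(D,E)$ with $p'(E=1)>0$ and $p'(E=0)>0$, and let $M',m'$ be real numbers in the feasible region for $p'$, i.e. $\max_{e\in\{0,1\}} p'(D=1\mid E=e)\le M'\le 1$ and $0\le m'\le \min_{e\in\{0,1\}} p'(D=1\mid E=e)$. Then for every $\delta>0$ there exists a joint distribution $p(D,E,U)$, with $D,E$ binary and $U$ categorical (finitely many values), satisfying positivity (i.e. $p(U=u)>0$ implies $p(E=e\mid U=u)>0$ for both $e\in\{0,1\}$), such that, writing $M=\max_{e,u} p(D=1\mid E=e,U=u)$ and $m=\min_{e,u}p(D=1\mid E=e,U=u)$ (over $e\in\{0,1\}$ and $u$ with $p(U=u)>0$): (i) $|M-M'|<\delta$, $|m-m'|<\delta$, and $|p(D=d,E=e)-p'(D=d,E=e)|<\delta$ for all $d,e\in\{0,1\}$; and (ii) simultaneously, $$\bigl|\,p(D_1=1)-\bigl[p(D=1,E=1)+p(E=0)\,m\bigr]\bigr|<\delta \quad\text{and}\quad \bigl|\,p(D_0=1)-\bigl[p(D=1,E=0)+p(E=1)\,M\bigr]\bigr|<\delta,$$ where $p(D_e=1)=\sum_u p(D=1\mid E=e,U=u)\,p(U=u)$ is the counterfactual probability of the outcome under exposure level $e$.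
   Context: Setting: $E$ (exposure) and $D$ (outcome) are binary, $U$ is an unmeasured categorical confounder, and the causal structure is the graph $U\to E$, $U\to D$, $E\to D$, interpreted as a non-parametric structural equation model with independent errors. $D_e$ denotes the counterfactual outcome when the exposure is set to $E=e$; under this model (counterfactual consistency and $D_e\perp E\mid U$) one has $p(D_e=1)=\sum_u p(D=1\mid E=e,U=u)p(U=u)$. The sensitivity parameters are $M=\max_{e,u}p(D=1\mid E=e,U=u)$ and $m=\min_{e,u}p(D=1\mid E=e,U=u)$. For any such model one has the bounds $p(D=1,E=e)+p(E=1-e)\,m\le p(D_e=1)\le p(D=1,E=e)+p(E=1-e)\,M$; the theorem says the lower bound for $p(D_1=1)$ and the upper bound for $p(D_0=1)$ are simultaneously arbitrarily sharp. *)

(* Defs.v *)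
From mathcomp Require Import all_boot all_order all_algebra.
From mathcomp Require Import reals.
Set Implicit Arguments. Unset Strict Implicit. Unset Printing Implicit Defensive.
Import Order.TTheory GRing.Theory Num.Theory.
Local Open Scope ring_scope.

(* Convention: D = 1 is encoded as [true], E = 1 as [true]. *)

Section Defs.
Variable R : realType.

(* ---------- observed distribution p'(D,E) : q d e = p'(D=d, E=e) ---------- *)
Definition is_dist2 (q : bool -> bool -> R) : Prop :=
  (forall d e, 0 <= q d e) /\ \sum_(d : bool) \sum_(e : bool) q d e = 1.

Definition margE2 (q : bool -> bool -> R) (e : bool) : R :=
  \sum_(d : bool) q d e.

Definition condD2 (q : bool -> bool -> R) (e : bool) : R :=
  q true e / margE2 q e.

(* ---------- full distribution p(D,E,U), U in 'I_k : p d e u = p(D=d,E=e,U=u) *)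
Variable k : nat.
Implicit Types (p : bool -> bool -> 'I_k -> R).

Definition is_dist3 p : Prop :=
  (forall d e u, 0 <= p d e u) /\
  \sum_(d : bool) \sum_(e : bool) \sum_(u < k) p d e u = 1.

Definition margU p (u : 'I_k) : R := \sum_(d : bool) \sum_(e : bool) p d e u.
Definition margEU p (e : bool) (u : 'I_k) : R := \sum_(d : bool) p d e u.
Definition margE p (e : bool) : R := \sum_(u < k) margEU p e u.
Definition margDE p (d e : bool) : R := \sum_(u < k) p d e u.
Definition condE p (e : bool) (u : 'I_k) : R := margEU p e u / margU p u.
Definition condD p (e : bool) (u : 'I_k) : R := p true e u / margEU p e u.

Definition positivity p : Prop :=
  forall u, 0 < margU p u -> forall e, 0 < condE p e u.

Definition is_maxcond p (M : R) : Prop :=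
  (exists e u, 0 < margU p u /\ condD p e u = M) /\
  (forall e u, 0 < margU p u -> condD p e u <= M).

Definition is_mincond p (m : R) : Prop :=
  (exists e u, 0 < margU p u /\ condD p e u = m) /\
  (forall e u, 0 < margU p u -> m <= condD p e u).

Definition pcf p (e : bool) : R := \sum_(u < k) condD p e u * margU p u.

End Defs.

(* Main.v *)
Require Import Defs.
From mathcomp Require Import all_boot all_order all_algebra.
From mathcomp Require Import reals.
From mathcomp Require Import ring lra.
Import Order.TTheory GRing.Theory Num.Theory.
Local Open Scope ring_scope.

Lemma ord2_cases (u : 'I_2) : u = ord0 \/ u = ord_max.
Proof.
case: u => [[|[|n]] H].
- by left; apply/val_inj.
- by right; apply/val_inj.
- by [].
Qed.

Lemma sum_ord2 (R : realType) (F : 'I_2 -> R) :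
  \sum_(u < 2) F u = F ord0 + F ord_max.
Proof.
rewrite !big_ord_recr big_ord0 /= add0r.
by congr (F _ + F _); apply/val_inj.
Qed.

Theorem theorem1 (R : realType) (q : bool -> bool -> R) (M' m' : R) :
  is_dist2 q ->
  0 < margE2 q true -> 0 < margE2 q false ->
  (forall e, condD2 q e <= M') -> M' <= 1 ->
  0 <= m' -> (forall e, m' <= condD2 q e) ->
  forall delta : R, 0 < delta ->
  exists (k : nat) (p : bool -> bool -> 'I_k -> R) (M m : R),
    [/\ is_dist3 p, positivity p, is_maxcond p M, is_mincond p m &
      [/\ `|M - M'| < delta, `|m - m'| < delta,
          (forall d e, `|margDE p d e - q d e| < delta),
          `|pcf p true - (margDE p true true + margE p false * m)| < delta &
          `|pcf p false - (margDE p true false + margE p true * M)| < delta]].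
Proof.
move=> [q0 q1] A1p A0p HM HM1 Hm0 Hm delta dp.
have qa := q0 true true; have qb := q0 false true.
have qc := q0 true false; have qd := q0 false false.
have H1 := HM true; have H0 := HM false; have H2 := Hm true; have H3 := Hm false.
move: q1 A1p A0p H1 H0 H2 H3; rewrite /condD2 /margE2 !big_bool /=.
move: qa qb qc qd.
move Ea : (q true true) => a; move Eb : (q false true) => b.
move Ec : (q true false) => c; move Ed : (q false false) => d.
move=> qa qb qc qd q1 A1p A0p H1 H0 H2 H3.
clear HM Hm.
set A1 := a + b in A1p H1 H2 *; set A0 := c + d in A0p H0 H3 *.
set r1 := a / A1 in H1 H2 *; set r0 := c / A0 in H0 H3 *.
have ea : a = r1 * A1 by rewrite /r1 mulfVK // gt_eqF.
have ec : c = r0 * A0 by rewrite /r0 mulfVK // gt_eqF.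
have eb : b = (1 - r1) * A1 by rewrite mulrBl -ea mul1r /A1; lra.
have ed : d = (1 - r0) * A0 by rewrite mulrBl -ec mul1r /A0; lra.
have r11 : r1 <= 1 by rewrite /r1 ler_pdivrMr // mul1r /A1; lra.
have r01 : r0 <= 1 by rewrite /r0 ler_pdivrMr // mul1r /A0; lra.
have r10 : 0 <= r1 by rewrite /r1 divr_ge0 // ltW.
have r00 : 0 <= r0 by rewrite /r0 divr_ge0 // ltW.
have [eps [ep [eD e1]]] : exists eps : R, 0 < eps /\ eps < delta /\ eps < 1.
  case: (lerP delta 1) => h; [exists (delta/2) | exists (1/2)]; lra.
clearbody r1 r0 A1 A0.
subst a b c d.
pose p := fun (dd ee : bool) (u : 'I_2) =>
  if (val u == 1)%N then
    match dd, ee with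
    | true, true => (1 - eps) * (r1 * A1)
    | false, true => (1 - eps) * ((1 - r1) * A1)
    | true, false => eps * A0 * M'
    | false, false => eps * A0 * (1 - M')
    end
  else
    match dd, ee with
    | true, false => (1 - eps) * (r0 * A0)
    | false, false => (1 - eps) * ((1 - r0) * A0)
    | true, true => eps * A1 * m'
    | false, true => eps * A1 * (1 - m')
    end.
have mEU1 : forall ee, margEU p ee ord_max =
   if ee then (1 - eps) * A1 else eps * A0.
  by case; rewrite /margEU big_bool /p /=; ring.
have mEU0 : forall ee, margEU p ee ord0 =
   if ee then eps * A1 else (1 - eps) * A0.
  by case; rewrite /margEU big_bool /p /=; ring.
have mU1 : margU p ord_max = (1 - eps) * A1 + eps * A0.
  by rewrite /margU !big_bool /p /=; ring.
have mU0 : margU p ord0 = eps * A1 + (1 - eps) * A0.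
  by rewrite /margU !big_bool /p /=; ring.
have cD1 : forall ee, condD p ee ord_max = if ee then r1 else M'.
  case; rewrite /condD mEU1 /p /=; field; rewrite ?gt_eqF //; nra.
have cD0 : forall ee, condD p ee ord0 = if ee then m' else r0.
  case; rewrite /condD mEU0 /p /=; field; rewrite ?gt_eqF //; nra.
have q1' := q1; rewrite ea eb ec ed in q1'.
have A1le : A1 <= 1 by nra.
have A0le : A0 <= 1 by nra.
have X1 : 0 <= A1 * (r1 - m') <= 1 by apply/andP; split; nra.
have X2 : 0 <= A0 * (M' - r0) <= 1 by apply/andP; split; nra.
have X3 : 0 <= A0 * (r1 - m') <= 1 by apply/andP; split; nra.
have X4 : 0 <= A1 * (M' - r0) <= 1 by apply/andP; split; nra.
move/andP: X1 => [X1 X1']; move/andP: X2 => [X2 X2'].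
move/andP: X3 => [X3 X3']; move/andP: X4 => [X4 X4'].
exists 2, p, M', m'.
split.
- split.
    move=> dd ee u; rewrite /p; case: (_ == _); case: dd; case: ee; repeat apply: mulr_ge0; lra.
  rewrite !big_bool !sum_ord2 /p /= -[RHS]q1'; ring.
- move=> u _ ee; case: (ord2_cases u) => ->; rewrite /condE ?mEU0 ?mEU1 ?mU0 ?mU1;
    case: ee; apply: divr_gt0; nra.
- split; last first.
    move=> ee u _; case: (ord2_cases u) => ->; rewrite ?cD0 ?cD1; case: ee; lra.
  by exists false, ord_max; rewrite mU1 cD1; split => //; nra.
- split; last first.
    move=> ee u _; case: (ord2_cases u) => ->; rewrite ?cD0 ?cD1; case: ee; lra.
  by exists true, ord0; rewrite mU0 cD0; split => //; nra.
split.
- by rewrite subrr normr0.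
- by rewrite subrr normr0.
- move=> dd ee; rewrite /margDE sum_ord2 /p /=.
  case: dd; case: ee; rewrite ?ea ?eb ?ec ?ed ltr_norml; apply/andP; split; nra.
- rewrite /pcf sum_ord2 cD0 cD1 mU0 mU1 /margDE /margE !sum_ord2 mEU0 mEU1 /p /=.
  rewrite ltr_norml; apply/andP; split; nra.
- rewrite /pcf sum_ord2 cD0 cD1 mU0 mU1 /margDE /margE !sum_ord2 mEU0 mEU1 /p /=.
  rewrite ltr_norml; apply/andP; split; nra.
Qed.
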